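(* Let $R_c,H,\alpha_L,\alpha_N,B,C>0$ and $0<\delta<1$. For $\lambda>0$ define, with $P_L(r_0)=\frac{1}{1+C\exp(-B(\arctan(H/r_0)-C))}$, $P_N=1-P_L$, $A_s(r_0)=(\delta(H^2+r_0^2)^{\alpha_s/2})^{1/\alpha_N}$, $B_s(r_0)=(\frac1\delta(H^2+r_0^2)^{\alpha_s/2})^{1/\alpha_N}$ ($s\in\{L,N\}$), the area fractions $\bar{C}_{\mathcal{A}_1}=\frac{2}{R_c^2}\sum_{s}\int_0^{R_c}P_s(r_0)F_{r_1|r_0}(A_s(r_0))r_0\,dr_0$ and $\bar{C}_{\mathcal{A}_3}=\frac{2}{R_c^2}\sum_{s}\int_0^{R_c}P_s(r_0)(1-F_{r_1|r_0}(B_s(r_0)))r_0\,dr_0$, where $F_{r_1|r_0}$ depends on $\lambda$ as described in the context. Then $\bar{C}_{\mathcal{A}_1}$ increases with $\lambda$ and $\bar{C}_{\mathcal{A}_3}$ decreases with $\lambda$.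
   Context: $F_{r_1|r_0}$ is the CDF of the distance $r_1$ from $x_0=(r_0,0)$, $0\le r_0\le R_c$, to the nearest point of $\Phi\setminus\{y:\|y\|\le R_c\}$, $\Phi$ a homogeneous Poisson point process of intensity $\lambda$ on $\mathbb{R}^2$: $F_{r_1|r_0}(r)=0$ for $r\le R_c-r_0$, $=1-e^{-\lambda\zeta_2(r)}$ for $R_c-r_0<r<R_c+r_0$, where $\zeta_2(r)=\pi r^2-\theta_1R_c^2+R_c^2\sin\theta_1\cos\theta_1-\theta_2r^2+r^2\sin\theta_2\cos\theta_2$, $\theta_1=\arccos\frac{R_c^2+r_0^2-r^2}{2R_cr_0}$, $\theta_2=\arccos\frac{r_0^2+r^2-R_c^2}{2r_0r}$, and $=1-e^{-\lambda(\pi r^2-\pi R_c^2)}$ otherwise. $\bar C_{\mathcal{A}_1}$ (resp. $\bar C_{\mathcal{A}_3}$) is the expected fraction of the malfunction disc whose users are served by the nearest ground base station only (resp. the UAV only). *)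

(* Defs.v *)
From Stdlib Require Import Reals.
From Coquelicot Require Import Coquelicot.
Open Scope R_scope.

(* zeta_2(r) for the lens-shaped region, x0 = (r0,0), disc radius Rc *)
Definition theta1 (Rc r0 r : R) : R :=
  acos ((Rc ^ 2 + r0 ^ 2 - r ^ 2) / (2 * Rc * r0)).
Definition theta2 (Rc r0 r : R) : R :=
  acos ((r0 ^ 2 + r ^ 2 - Rc ^ 2) / (2 * r0 * r)).
Definition zeta2 (Rc r0 r : R) : R :=
  let t1 := theta1 Rc r0 r in
  let t2 := theta2 Rc r0 r in
  PI * r ^ 2 - t1 * Rc ^ 2 + Rc ^ 2 * sin t1 * cos t1
  - t2 * r ^ 2 + r ^ 2 * sin t2 * cos t2.

Definition Fr1 (lam Rc r0 r : R) : R :=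
  if Rle_dec r (Rc - r0) then 0
  else if Rlt_dec r (Rc + r0) then 1 - exp (- lam * zeta2 Rc r0 r)
  else 1 - exp (- lam * (PI * r ^ 2 - PI * Rc ^ 2)).

Definition PL (H B C r0 : R) : R :=
  1 / (1 + C * exp (- B * (atan (H / r0) - C))).
Definition PN (H B C r0 : R) : R := 1 - PL H B C r0.

Definition Athr (H alphaN delta alphas r0 : R) : R :=
  Rpower (delta * Rpower (H ^ 2 + r0 ^ 2) (alphas / 2)) (1 / alphaN).
Definition Bthr (H alphaN delta alphas r0 : R) : R :=
  Rpower (/ delta * Rpower (H ^ 2 + r0 ^ 2) (alphas / 2)) (1 / alphaN).

Definition CA1 (Rc H alphaL alphaN B C delta lam : R) : R :=
  2 / Rc ^ 2 *
  (RInt (fun r0 => PL H B C r0 * Fr1 lam Rc r0 (Athr H alphaN delta alphaL r0) * r0) 0 Rc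
 + RInt (fun r0 => PN H B C r0 * Fr1 lam Rc r0 (Athr H alphaN delta alphaN r0) * r0) 0 Rc).

Definition CA3 (Rc H alphaL alphaN B C delta lam : R) : R :=
  2 / Rc ^ 2 *
  (RInt (fun r0 => PL H B C r0 * (1 - Fr1 lam Rc r0 (Bthr H alphaN delta alphaL r0)) * r0) 0 Rc
 + RInt (fun r0 => PN H B C r0 * (1 - Fr1 lam Rc r0 (Bthr H alphaN delta alphaN r0)) * r0) 0 Rc).

(* Main.v *)
Require Import Defs.
From Stdlib Require Import Reals Lra.
From Coquelicot Require Import Coquelicot.
Open Scope R_scope.

Lemma atan_le_id y : 0 <= y -> atan y <= y.
Proof.
  intros Hy.
  destruct (MVT_gen (fun t => t - atan t) 0 y (fun t => 1 - / (1 + t^2))) as [c [Hc Heq]].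
  - intros x _. auto_derive. auto. field. nra.
  - intros x _. apply continuity_pt_filterlim.
    apply (continuous_minus (fun t => t) atan). apply continuous_id.
    apply ex_derive_continuous. auto_derive. auto.
  - rewrite atan_0 in Heq.
    assert (0 <= 1 - / (1 + c^2)).
    { assert (1 <= 1 + c^2) by nra.
      assert (/ (1 + c^2) <= 1).
      { rewrite <- Rinv_1. apply Rinv_le_contravar; lra. }
      lra. }
    assert (0 <= (1 - / (1 + c ^ 2)) * (y - 0)) by (apply Rmult_le_pos; lra).
    lra.
Qed.

Definition Sseg (h d : R) := (h^2+d^2)*(PI/2 - atan (d/h)) - h*d.

Lemma Sseg_decr h d1 d2 : 0 < h -> d2 <= d1 -> Sseg h d1 <= Sseg h d2.
Proof.
  intros Hh Hd.
  destruct (MVT_gen (Sseg h) d2 d1 (fun d => 2*d*(PI/2 - atan (d/h)) - 2*h)) as [c [Hc Heq]].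
  - intros x _. unfold Sseg. auto_derive. lra.
    unfold Rdiv. field. split; [lra| nra].
  - intros x _. apply derivable_continuous_pt. exists (2*x*(PI/2 - atan (x/h)) - 2*h).
    apply is_derive_Reals. unfold Sseg. auto_derive. lra.
    unfold Rdiv. field. split; [lra| nra].
  - assert (c * (PI/2 - atan (c/h)) <= h).
    { destruct (Rle_or_lt c 0) as [Hc0|Hc0].
      - pose proof (atan_bound (c/h)). assert (0 <= PI/2 - atan (c/h)) by lra. nra.
      - assert (E: atan (c/h) = PI/2 - atan (h/c)).
        { rewrite <- atan_inv. f_equal. field. lra. apply Rdiv_lt_0_compat; lra. }
        rewrite E. pose proof (atan_le_id (h/c)).
        assert (atan (h/c) <= h/c) by (apply atan_le_id; apply Rlt_le, Rdiv_lt_0_compat; lra).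
        replace h with (c * (h/c)) at 2 by (field; lra).
        replace (PI/2 - (PI/2 - atan (h/c))) with (atan (h/c)) by ring.
        apply Rmult_le_compat_l; lra. }
    assert ((2 * c * (PI / 2 - atan (c / h)) - 2 * h) * (d1 - d2) <= 0).
    { apply Rmult_le_0_r; lra. }
    lra.
Qed.
Lemma acos_mid x : -1 < x < 1 -> acos x = PI/2 - atan (x / sqrt (1 - x²)).
Proof. intros. unfold acos. repeat destruct Rle_dec; lra. Qed.

Lemma zeta2_mid Rc r0 r : 0 < Rc -> 0 < r0 <= Rc -> Rc - r0 < r < Rc + r0 ->
  0 <= zeta2 Rc r0 r.
Proof.
  intros HRc Hr0 Hr.
  assert (Hrp : 0 < r) by lra.
  unfold zeta2, theta1, theta2.
  set (a1 := (Rc ^ 2 + r0 ^ 2 - r ^ 2) / (2 * Rc * r0)).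
  set (a2 := (r0 ^ 2 + r ^ 2 - Rc ^ 2) / (2 * r0 * r)).
  assert (E1 : a1 * (2 * Rc * r0) = Rc ^ 2 + r0 ^ 2 - r ^ 2) by (unfold a1; field; lra).
  assert (E2 : a2 * (2 * r0 * r) = r0 ^ 2 + r ^ 2 - Rc ^ 2) by (unfold a2; field; lra).
  assert (D1 : 0 < 2 * Rc * r0) by nra.
  assert (D2 : 0 < 2 * r0 * r) by nra.
  assert (Ha1 : -1 < a1 < 1).
  { split.
    - destruct (Rle_or_lt a1 (-1)); [|assumption].
      assert (a1 * (2*Rc*r0) <= -1 * (2*Rc*r0)) by (apply Rmult_le_compat_r; lra). nra.
    - destruct (Rle_or_lt 1 a1); [|assumption].
      assert (1 * (2*Rc*r0) <= a1 * (2*Rc*r0)) by (apply Rmult_le_compat_r; lra). nra. }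
  assert (Ha2 : -1 < a2 < 1).
  { split.
    - destruct (Rle_or_lt a2 (-1)); [|assumption].
      assert (a2 * (2*r0*r) <= -1 * (2*r0*r)) by (apply Rmult_le_compat_r; lra). nra.
    - destruct (Rle_or_lt 1 a2); [|assumption].
      assert (1 * (2*r0*r) <= a2 * (2*r0*r)) by (apply Rmult_le_compat_r; lra). nra. }
  assert (Hq1 : 0 < 1 - a1²) by (unfold Rsqr; nra).
  assert (Hq2 : 0 < 1 - a2²) by (unfold Rsqr; nra).
  set (s1 := sqrt (1 - a1²)). set (s2 := sqrt (1 - a2²)).
  assert (Hs1 : 0 < s1) by (apply sqrt_lt_R0; lra).
  assert (Hs2 : 0 < s2) by (apply sqrt_lt_R0; lra).
  assert (Ss1 : s1 * s1 = 1 - a1²) by (apply sqrt_sqrt; lra).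
  assert (Ss2 : s2 * s2 = 1 - a2²) by (apply sqrt_sqrt; lra).
  rewrite (sin_acos a1), (cos_acos a1), (sin_acos a2), (cos_acos a2) by lra.
  fold s1 s2.
  rewrite (acos_mid a1), (acos_mid a2) by lra. fold s1 s2.
  set (u1 := Rc * a1). set (u2 := r * a2).
  assert (U : u1 + u2 = r0).
  { unfold u1, u2. apply Rmult_eq_reg_r with (2 * r0); [|lra].
    replace ((Rc * a1 + r * a2) * (2 * r0)) with (a1 * (2*Rc*r0) + a2 * (2*r0*r)) by ring.
    rewrite E1, E2. ring. }
  assert (U2 : u2 - u1 = (r^2 - Rc^2) / r0).
  { unfold u1, u2. apply Rmult_eq_reg_r with (2 * r0); [|lra].
    replace ((r * a2 - Rc * a1) * (2 * r0)) with (a2 * (2*r0*r) - a1 * (2*Rc*r0)) by ring.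
    rewrite E1, E2. field. lra. }
  set (h := Rc * s1).
  assert (Hh : 0 < h) by (unfold h; nra).
  assert (Hh2 : r * s2 = h).
  { assert (Q : (r * s2) * (r * s2) = h * h).
    { unfold h. replace (r * s2 * (r * s2)) with (r^2 * (s2 * s2)) by ring.
      replace (Rc * s1 * (Rc * s1)) with (Rc^2 * (s1 * s1)) by ring.
      rewrite Ss1, Ss2. unfold Rsqr.
      replace (r ^ 2 * (1 - a2 * a2)) with (r^2 - u2 * u2) by (unfold u2; ring).
      replace (Rc ^ 2 * (1 - a1 * a1)) with (Rc^2 - u1 * u1) by (unfold u1; ring).
      assert (u2 * u2 - u1 * u1 = (u2 - u1) * (u1 + u2)) by ring.
      rewrite U2, U in H. field_simplify in H; [|lra]. lra. }
    assert (0 < r * s2) by nra.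
    nra. }
  assert (Z : Sseg h (- u2) - Sseg h u1 =
     PI * r ^ 2 - (PI / 2 - atan (a1 / s1)) * Rc ^ 2 + Rc ^ 2 * s1 * a1 -
     (PI / 2 - atan (a2 / s2)) * r ^ 2 + r ^ 2 * s2 * a2).
  { unfold Sseg.
    replace (- u2 / h) with (- (a2 / s2)) by (rewrite <- Hh2; unfold u2; field; lra).
    replace (u1 / h) with (a1 / s1) by (unfold h, u1; field; lra).
    rewrite atan_opp.
    replace (h ^ 2 + (- u2) ^ 2) with (r^2 * (s2 * s2 + a2 * a2)) by (rewrite <- Hh2; unfold u2; ring).
    replace (h ^ 2 + u1 ^ 2) with (Rc^2 * (s1 * s1 + a1 * a1)) by (unfold h, u1; ring).
    rewrite Ss1, Ss2. unfold Rsqr.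
    replace (h * - u2) with (- (r * s2) * u2) by (rewrite Hh2; ring).
    unfold h, u1, u2. field. }
  rewrite <- Z.
  assert (Sseg h u1 <= Sseg h (- u2)) by (apply Sseg_decr; lra).
  lra.
Qed.
Lemma cp_plus f g x : continuity_pt f x -> continuity_pt g x -> continuity_pt (fun y => f y + g y) x.
Proof. intros; apply (continuity_pt_plus f g); auto. Qed.
Lemma cp_minus f g x : continuity_pt f x -> continuity_pt g x -> continuity_pt (fun y => f y - g y) x.
Proof. intros; apply (continuity_pt_minus f g); auto. Qed.
Lemma cp_mult f g x : continuity_pt f x -> continuity_pt g x -> continuity_pt (fun y => f y * g y) x.
Proof. intros; apply (continuity_pt_mult f g); auto. Qed.
Lemma cp_opp f x : continuity_pt f x -> continuity_pt (fun y => - f y) x.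
Proof. intros; apply (continuity_pt_opp f); auto. Qed.
Lemma cp_const (c : R) x : continuity_pt (fun _ => c) x.
Proof. apply continuity_pt_const. intros a b; reflexivity. Qed.
Lemma cp_id x : continuity_pt (fun y => y) x.
Proof. apply continuity_pt_id. Qed.
Lemma cp_inv f x : continuity_pt f x -> f x <> 0 -> continuity_pt (fun y => / f y) x.
Proof. intros; apply (continuity_pt_inv f); auto. Qed.
Lemma cp_div f g x : continuity_pt f x -> continuity_pt g x -> g x <> 0 -> continuity_pt (fun y => f y / g y) x.
Proof. intros; apply (continuity_pt_div f g); auto. Qed.
Lemma cp_pow f n x : continuity_pt f x -> continuity_pt (fun y => f y ^ n) x.
Proof. intros. apply (continuity_pt_comp f (fun y => y ^ n)); auto. apply derivable_continuous_pt. apply derivable_pt_pow. Qed.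
Lemma cp_gen (F : R -> R) f x : continuity_pt f x -> continuity_pt F (f x) -> continuity_pt (fun y => F (f y)) x.
Proof. intros. apply (continuity_pt_comp f F); auto. Qed.
Lemma cp_sin f x : continuity_pt f x -> continuity_pt (fun y => sin (f y)) x.
Proof. intros. apply cp_gen; auto. apply continuity_sin. Qed.
Lemma cp_cos f x : continuity_pt f x -> continuity_pt (fun y => cos (f y)) x.
Proof. intros. apply cp_gen; auto. apply continuity_cos. Qed.
Lemma cp_exp f x : continuity_pt f x -> continuity_pt (fun y => exp (f y)) x.
Proof. intros. apply cp_gen; auto. apply derivable_continuous_pt. apply derivable_pt_exp. Qed.
Lemma cp_atan f x : continuity_pt f x -> continuity_pt (fun y => atan (f y)) x.
Proof. intros. apply cp_gen; auto. apply derivable_continuous_pt. apply derivable_pt_atan. Qed.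
Lemma cp_Rpower f c x : continuity_pt f x -> 0 < f x -> continuity_pt (fun y => Rpower (f y) c) x.
Proof.
  intros Hf Hp. unfold Rpower. apply cp_exp. apply cp_mult. apply cp_const.
  apply cp_gen; auto. apply derivable_continuous_pt. exists (/ f x). apply derivable_pt_lim_ln; auto.
Qed.

Lemma acos_cont1 : continuity_pt acos 1.
Proof.
  intros eps Heps.
  set (e := Rmin eps (PI/2)).
  assert (He : 0 < e) by (unfold e; apply Rmin_glb_lt; [lra | pose proof PI_RGT_0; lra]).
  assert (He2 : e <= PI/2) by (unfold e; apply Rmin_r).
  assert (He3 : e <= eps) by (unfold e; apply Rmin_l).
  pose proof PI_RGT_0.
  assert (Hce : cos e < 1).
  { rewrite <- cos_0. apply cos_decreasing_1; lra. }
  exists (1 - cos e). split; [lra|].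
  intros y [_ Hy]. simpl in Hy |- *. unfold R_dist in *. rewrite acos_1.
  destruct (Rle_or_lt 1 y) as [Hy1|Hy1].
  - unfold acos. destruct (Rle_dec y (-1)); [lra|]. destruct (Rle_dec 1 y); [|lra].
    simpl; unfold R_dist; rewrite Rminus_0_r, Rabs_R0; lra.
  - rewrite Rabs_left1 in Hy by lra.
    pose proof (COS_bound e).
    pose proof (acos_bound y).
    assert (Hya : acos y < e).
    { destruct (Rlt_or_le (acos y) e) as [|Hge]; [assumption|].
      destruct (Rle_lt_or_eq_dec _ _ Hge) as [Hlt|Heq].
      - assert (cos (acos y) < cos e) by (apply cos_decreasing_1; lra).
        rewrite cos_acos in H2 by lra. lra.
      - assert (cos (acos y) = cos e) by (rewrite Heq; reflexivity).
        rewrite cos_acos in H2 by lra. lra. }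
    rewrite Rminus_0_r, Rabs_right by lra. lra.
Qed.

Lemma acos_cont x : continuity_pt acos x.
Proof.
  destruct (Rtotal_order x (-1)) as [Hx|[Hx|Hx]].
  - apply continuity_pt_ext_loc with (fun _ => PI).
    + apply locally_interval with m_infty (-1); simpl; auto.
      intros y _ Hy. unfold acos. destruct (Rle_dec y (-1)); [reflexivity|lra].
    + apply cp_const.
  - subst x. apply continuity_pt_ext_loc with (fun y => PI - acos (- y)).
    + exists (mkposreal 1 Rlt_0_1). intros y _. rewrite acos_opp. ring.
    + apply cp_minus. apply cp_const. apply (cp_gen acos (fun y => - y)).
      apply cp_opp, cp_id. replace (- -1) with 1 by ring. apply acos_cont1.
  - destruct (Rtotal_order x 1) as [Hx1|[Hx1|Hx1]].
    + apply derivable_continuous_pt, derivable_pt_acos; lra.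
    + subst; apply acos_cont1.
    + apply continuity_pt_ext_loc with (fun _ => 0).
      * apply locally_interval with 1 p_infty; simpl; auto.
        intros y Hy _. unfold acos. destruct (Rle_dec y (-1)); [lra|].
        destruct (Rle_dec 1 y); [reflexivity|lra].
      * apply cp_const.
Qed.
Lemma zeta2_low Rc r0 r : 0 < Rc -> 0 < r0 -> 0 < r -> r <= Rc - r0 -> zeta2 Rc r0 r = 0.
Proof.
  intros HRc Hr0 Hr Hle.
  unfold zeta2, theta1, theta2.
  assert (A1 : acos ((Rc ^ 2 + r0 ^ 2 - r ^ 2) / (2 * Rc * r0)) = 0).
  { unfold acos. destruct Rle_dec as [h|h].
    - exfalso. apply Rle_div_l in h; [|nra]. nra.
    - destruct Rle_dec as [h'|h']; [reflexivity|]. exfalso. apply h'.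
      apply Rle_div_r; [nra|]. nra. }
  assert (A2 : acos ((r0 ^ 2 + r ^ 2 - Rc ^ 2) / (2 * r0 * r)) = PI).
  { unfold acos. destruct Rle_dec as [h|h]; [reflexivity|].
    exfalso. apply h. apply Rle_div_l; [nra|]. nra. }
  rewrite A1, A2, sin_0, cos_0, sin_PI, cos_PI. ring.
Qed.

Lemma zeta2_high Rc r0 r : 0 < Rc -> 0 < r0 -> Rc + r0 <= r -> zeta2 Rc r0 r = PI * r ^ 2 - PI * Rc ^ 2.
Proof.
  intros HRc Hr0 Hle.
  unfold zeta2, theta1, theta2.
  assert (A1 : acos ((Rc ^ 2 + r0 ^ 2 - r ^ 2) / (2 * Rc * r0)) = PI).
  { unfold acos. destruct Rle_dec as [h|h]; [reflexivity|].
    exfalso. apply h. apply Rle_div_l; [nra|]. nra. }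
  assert (A2 : acos ((r0 ^ 2 + r ^ 2 - Rc ^ 2) / (2 * r0 * r)) = 0).
  { unfold acos. destruct Rle_dec as [h|h].
    - exfalso. apply Rle_div_l in h; [|nra]. nra.
    - destruct Rle_dec as [h'|h']; [reflexivity|]. exfalso. apply h'.
      apply Rle_div_r; [nra|]. nra. }
  rewrite A1, A2, sin_0, cos_0, sin_PI, cos_PI. ring.
Qed.

Lemma Fr1_eq lam Rc r0 r : 0 < Rc -> 0 < r0 -> 0 < r ->
  Fr1 lam Rc r0 r = 1 - exp (- lam * zeta2 Rc r0 r).
Proof.
  intros HRc Hr0 Hr. unfold Fr1.
  destruct Rle_dec as [h|h].
  - rewrite zeta2_low by auto. rewrite Rmult_0_r, exp_0. ring.
  - destruct Rlt_dec as [h'|h']; [reflexivity|].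
    rewrite zeta2_high by lra. reflexivity.
Qed.

Lemma zeta2_nonneg Rc r0 r : 0 < Rc -> 0 < r0 <= Rc -> 0 < r -> 0 <= zeta2 Rc r0 r.
Proof.
  intros HRc Hr0 Hr.
  destruct (Rle_or_lt r (Rc - r0)).
  - rewrite zeta2_low by lra. lra.
  - destruct (Rlt_or_le r (Rc + r0)).
    + apply zeta2_mid; lra.
    + rewrite zeta2_high by lra. pose proof PI_RGT_0. assert (0 <= r^2 - Rc^2) by nra. replace (PI * r ^ 2 - PI * Rc ^ 2) with (PI * (r^2 - Rc^2)) by ring. apply Rmult_le_pos; lra.
Qed.

Lemma Fr1_bounds lam Rc r0 r : 0 <= lam -> 0 < Rc -> 0 < r0 <= Rc -> 0 < r ->
  0 <= Fr1 lam Rc r0 r <= 1.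
Proof.
  intros Hl HRc Hr0 Hr. rewrite Fr1_eq by lra.
  pose proof (zeta2_nonneg Rc r0 r HRc Hr0 Hr).
  pose proof (exp_pos (- lam * zeta2 Rc r0 r)).
  assert (exp (- lam * zeta2 Rc r0 r) <= 1).
  { rewrite <- exp_0. destruct (Req_dec (- lam * zeta2 Rc r0 r) 0) as [e|e].
    - rewrite e; lra.
    - apply Rlt_le, exp_increasing. assert (0 <= lam * zeta2 Rc r0 r) by nra. lra. }
  lra.
Qed.

Lemma Fr1_mono lam1 lam2 Rc r0 r : 0 <= lam1 <= lam2 -> 0 < Rc -> 0 < r0 <= Rc -> 0 < r ->
  Fr1 lam1 Rc r0 r <= Fr1 lam2 Rc r0 r.
Proof.
  intros Hl HRc Hr0 Hr. rewrite !Fr1_eq by lra.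
  pose proof (zeta2_nonneg Rc r0 r HRc Hr0 Hr).
  assert (exp (- lam2 * zeta2 Rc r0 r) <= exp (- lam1 * zeta2 Rc r0 r)).
  { destruct (Req_dec (- lam2 * zeta2 Rc r0 r) (- lam1 * zeta2 Rc r0 r)) as [e|e].
    - rewrite e; lra.
    - apply Rlt_le, exp_increasing. nra. }
  lra.
Qed.
Ltac cpt := repeat first [ apply cp_const | apply cp_id | apply cp_plus | apply cp_minus
  | apply cp_mult | apply cp_opp | apply cp_div | apply cp_pow | apply cp_sin | apply cp_cos
  | apply cp_exp | apply cp_atan | apply cp_Rpower
  | (apply (cp_gen acos); [|apply acos_cont]) | apply cp_inv ].

Lemma zeta2_cont Rc a x : 0 < Rc -> 0 < x -> continuity_pt a x -> 0 < a x ->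
  continuity_pt (fun y => zeta2 Rc y (a y)) x.
Proof.
  intros HRc Hx Ha Hax. unfold zeta2, theta1, theta2. cbv zeta.
  cpt; try exact Ha; nra.
Qed.

Lemma ex_int (Rc lam : R) (P a G : R -> R) :
 0 < Rc -> 0 <= lam ->
 (forall x, 0 < x -> continuity_pt P x) -> (forall x, 0 < x -> Rabs (P x) <= 1) ->
 (forall x, 0 < x -> continuity_pt a x) -> (forall x, 0 < x -> 0 < a x) ->
 (forall y, continuity_pt G y) -> (forall y, 0 <= y <= 1 -> Rabs (G y) <= 1) ->
 ex_RInt (fun x => P x * G (Fr1 lam Rc x (a x)) * x) 0 Rc.
Proof.
  intros HRc Hlam HPc HPb Hac Hap HGc HGb.
  set (f := fun x => P x * G (Fr1 lam Rc x (a x)) * x).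
  apply ex_RInt_ext with (fun x => f (Rmax 0 x)).
  { intros x Hx. rewrite Rmin_left, Rmax_right in Hx by lra. rewrite Rmax_right by lra. reflexivity. }
  apply (ex_RInt_continuous (V:=R_CompleteNormedModule)). intros z Hz. rewrite Rmin_left, Rmax_right in Hz by lra.
  apply (proj1 (continuity_pt_filterlim _ _)).
  destruct (Req_dec z 0) as [Hz0|Hz0].
  - subst z. intros eps Heps.
    exists (Rmin eps Rc). split.
    { apply Rmin_glb_lt; lra. }
    intros y [_ Hy]. simpl in Hy |- *. unfold R_dist in *.
    rewrite Rminus_0_r in Hy.
    assert (Hm1 : Rmin eps Rc <= eps) by apply Rmin_l.
    assert (Hm2 : Rmin eps Rc <= Rc) by apply Rmin_r.
    assert (F0 : f (Rmax 0 0) = 0) by (unfold f; rewrite Rmax_left by lra; ring).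
    rewrite F0, Rminus_0_r.
    unfold Rmax. destruct Rle_dec as [hy|hy].
    + destruct (Req_dec y 0) as [y0|y0].
      { subst y. unfold f. rewrite Rmult_0_r, Rabs_R0. lra. }
      unfold f. rewrite Rabs_mult.
      rewrite Rabs_right with y by lra.
      rewrite Rabs_right in Hy by lra.
      rewrite Rabs_mult.
      assert (Rabs (P y) <= 1) by (apply HPb; lra).
      assert (Rabs (G (Fr1 lam Rc y (a y))) <= 1).
      { apply HGb. apply Fr1_bounds; try lra. apply Hap; lra. }
      assert (Rabs (P y) * Rabs (G (Fr1 lam Rc y (a y))) <= 1).
      { rewrite <- (Rmult_1_r 1). apply Rmult_le_compat; auto using Rabs_pos. }
      assert (Rabs (P y) * Rabs (G (Fr1 lam Rc y (a y))) * y <= 1 * y) by (apply Rmult_le_compat_r; lra).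
      lra.
    + unfold f. rewrite Rmult_0_r, Rabs_R0. lra.
  - assert (Hzp : 0 < z) by lra.
    apply continuity_pt_ext_loc with (fun y => P y * G (1 - exp (- lam * zeta2 Rc y (a y))) * y).
    + apply locally_interval with 0 p_infty; simpl; auto.
      intros y Hy _. unfold f. rewrite Rmax_right by lra. rewrite Fr1_eq; auto.
    + apply cp_mult; [|apply cp_id]. apply cp_mult; [apply HPc; lra|].
      apply cp_gen; [|apply HGc].
      apply cp_minus; [apply cp_const|]. apply cp_exp. apply cp_mult; [apply cp_const|].
      apply zeta2_cont; auto.
Qed.
Lemma PL_bounds H B C x : 0 < C -> 0 < PL H B C x < 1.
Proof.
  intros HC. unfold PL.
  pose proof (exp_pos (- B * (atan (H / x) - C))).
  assert (0 < C * exp (- B * (atan (H / x) - C))) by (apply Rmult_lt_0_compat; lra).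
  split.
  - apply Rdiv_lt_0_compat; lra.
  - apply Rlt_div_l; lra.
Qed.

Lemma PL_cont H B C x : 0 < C -> 0 < x -> continuity_pt (PL H B C) x.
Proof.
  intros HC Hx. unfold PL. cpt; try lra.
  pose proof (exp_pos (- B * (atan (H / x) - C))).
  assert (0 < C * exp (- B * (atan (H / x) - C))) by (apply Rmult_lt_0_compat; lra).
  lra.
Qed.

Lemma PN_cont H B C x : 0 < C -> 0 < x -> continuity_pt (PN H B C) x.
Proof.
  intros HC Hx. unfold PN. apply (cp_minus (fun _ => 1) (PL H B C)). apply cp_const. apply PL_cont; auto.
Qed.

Lemma Rpow_pos a b : 0 < Rpower a b.
Proof. unfold Rpower. apply exp_pos. Qed.

Lemma thr_cont H aN k s x : 0 < H -> 0 < k ->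
  continuity_pt (fun y => Rpower (k * Rpower (H ^ 2 + y ^ 2) (s / 2)) (1 / aN)) x /\
  0 < Rpower (k * Rpower (H ^ 2 + x ^ 2) (s / 2)) (1 / aN).
Proof.
  intros HH Hk. split.
  - apply cp_Rpower. apply cp_mult. apply cp_const. apply cp_Rpower.
    apply cp_plus. apply cp_const. apply cp_pow, cp_id.
    nra.
    apply Rmult_lt_0_compat; auto. apply Rpow_pos.
  - apply Rpow_pos.
Qed.

Theorem corollary2 (Rc H alphaL alphaN B C delta : R) :
  0 < Rc -> 0 < H -> 0 < alphaL -> 0 < alphaN -> 0 < B -> 0 < C ->
  0 < delta < 1 ->
  forall lam1 lam2 : R, 0 < lam1 -> lam1 <= lam2 ->
    CA1 Rc H alphaL alphaN B C delta lam1 <= CA1 Rc H alphaL alphaN B C delta lam2 /\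
    CA3 Rc H alphaL alphaN B C delta lam2 <= CA3 Rc H alphaL alphaN B C delta lam1.
Proof.
  intros HRc HH HaL HaN HB HC Hd lam1 lam2 Hl1 Hl12.
  assert (Hk : 0 <= 2 / Rc ^ 2) by (apply Rlt_le, Rdiv_lt_0_compat; [lra | apply pow_lt; lra]).
  assert (HdI : 0 < / delta) by (apply Rinv_0_lt_compat; lra).
  assert (PLb : forall x, 0 < x -> Rabs (PL H B C x) <= 1).
  { intros x _. pose proof (PL_bounds H B C x HC). rewrite Rabs_right; lra. }
  assert (PNb : forall x, 0 < x -> Rabs (PN H B C x) <= 1).
  { intros x _. pose proof (PL_bounds H B C x HC). unfold PN. rewrite Rabs_right; lra. }
  assert (PLc : forall x, 0 < x -> continuity_pt (PL H B C) x) by (intros; apply PL_cont; auto).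
  assert (PNc : forall x, 0 < x -> continuity_pt (PN H B C) x) by (intros; apply PN_cont; auto).
  assert (AC : forall s x, 0 < x -> continuity_pt (Athr H alphaN delta s) x)
    by (intros; apply (thr_cont H alphaN delta s x HH); lra).
  assert (AP : forall s x, 0 < x -> 0 < Athr H alphaN delta s x)
    by (intros; apply (thr_cont H alphaN delta s x HH); lra).
  assert (BC : forall s x, 0 < x -> continuity_pt (Bthr H alphaN delta s) x)
    by (intros; apply (thr_cont H alphaN (/ delta) s x HH); lra).
  assert (BP : forall s x, 0 < x -> 0 < Bthr H alphaN delta s x)
    by (intros; apply (thr_cont H alphaN (/ delta) s x HH); lra).
  assert (Gid : forall y, continuity_pt (fun y => y) y) by (intros; apply cp_id).
  assert (Gidb : forall y, 0 <= y <= 1 -> Rabs ((fun y => y) y) <= 1)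
    by (intros; rewrite Rabs_right; lra).
  assert (G1 : forall y, continuity_pt (fun y => 1 - y) y)
    by (intros; apply cp_minus; [apply cp_const | apply cp_id]).
  assert (G1b : forall y, 0 <= y <= 1 -> Rabs ((fun y => 1 - y) y) <= 1)
    by (intros; rewrite Rabs_right; lra).
  assert (Hl1' : 0 <= lam1) by lra. assert (Hl2' : 0 <= lam2) by lra.
  split.
  - unfold CA1. apply Rmult_le_compat_l; [exact Hk|].
    apply Rplus_le_compat; apply RInt_le; try lra.
    + exact (ex_int Rc lam1 _ _ (fun y => y) HRc Hl1' PLc PLb (AC alphaL) (AP alphaL) Gid Gidb).
    + exact (ex_int Rc lam2 _ _ (fun y => y) HRc Hl2' PLc PLb (AC alphaL) (AP alphaL) Gid Gidb).
    + intros x Hx. pose proof (PL_bounds H B C x HC).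
      apply Rmult_le_compat_r; [lra|]. apply Rmult_le_compat_l; [lra|].
      apply Fr1_mono; try lra. apply AP; lra.
    + exact (ex_int Rc lam1 _ _ (fun y => y) HRc Hl1' PNc PNb (AC alphaN) (AP alphaN) Gid Gidb).
    + exact (ex_int Rc lam2 _ _ (fun y => y) HRc Hl2' PNc PNb (AC alphaN) (AP alphaN) Gid Gidb).
    + intros x Hx. pose proof (PL_bounds H B C x HC).
      apply Rmult_le_compat_r; [lra|]. apply Rmult_le_compat_l; [unfold PN; lra|].
      apply Fr1_mono; try lra. apply AP; lra.
  - unfold CA3. apply Rmult_le_compat_l; [exact Hk|].
    apply Rplus_le_compat; apply RInt_le; try lra.
    + exact (ex_int Rc lam2 _ _ (fun y => 1 - y) HRc Hl2' PLc PLb (BC alphaL) (BP alphaL) G1 G1b).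
    + exact (ex_int Rc lam1 _ _ (fun y => 1 - y) HRc Hl1' PLc PLb (BC alphaL) (BP alphaL) G1 G1b).
    + intros x Hx. pose proof (PL_bounds H B C x HC).
      apply Rmult_le_compat_r; [lra|]. apply Rmult_le_compat_l; [lra|].
      assert (Fr1 lam1 Rc x (Bthr H alphaN delta alphaL x) <= Fr1 lam2 Rc x (Bthr H alphaN delta alphaL x)).
      { apply Fr1_mono; try lra. apply BP; lra. }
      lra.
    + exact (ex_int Rc lam2 _ _ (fun y => 1 - y) HRc Hl2' PNc PNb (BC alphaN) (BP alphaN) G1 G1b).
    + exact (ex_int Rc lam1 _ _ (fun y => 1 - y) HRc Hl1' PNc PNb (BC alphaN) (BP alphaN) G1 G1b).
    + intros x Hx. pose proof (PL_bounds H B C x HC).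
      apply Rmult_le_compat_r; [lra|]. apply Rmult_le_compat_l; [unfold PN; lra|].
      assert (Fr1 lam1 Rc x (Bthr H alphaN delta alphaN x) <= Fr1 lam2 Rc x (Bthr H alphaN delta alphaN x)).
      { apply Fr1_mono; try lra. apply BP; lra. }
      lra.
Qed.
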